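(* Let $(\mathcal{G},\alpha)$ be an abstract GKM graph and $p\neq q$ vertices. Set $P=\prod_{e\in\mathcal{E}_p\setminus\mathcal{E}_{pq}}\alpha(e)$, $Q=\prod_{e\in\mathcal{E}_q\setminus\mathcal{E}_{qp}}\alpha(e)$, and for $e\in\mathcal{E}_{pq}$ let $c(e)=|\{e'\in\mathcal{E}_{pq}: e'\neq e,\ \alpha(\overline{e'})=-\alpha(e')\}|$. Then for every $e\in\mathcal{E}_{pq}$, the polynomial $P-(-1)^{c(e)}Q$ is divisible by $\alpha(e)$ in $H^*(BT)$.
   Context: $H^*(BT)=\mathbb{Z}[x_1,\dots,x_r]$ with $\deg x_i=2$. Let $\mathcal{G}$ be a finite $n$-valent undirected graph (multiple edges allowed, no loops) with vertex set $\mathcal{V}$ and set of directed edges $\mathcal{E}$; for $e\in\mathcal{E}$, $\overline e$ is the reversed edge, $i(e),t(e)$ its initial and terminal vertices, $\mathcal{E}_p=\{e: i(e)=p\}$, $\mathcal{E}_{pq}=\{e: i(e)=p,\ t(e)=q\}$. An axial function $\alpha:\mathcal{E}\to H^2(BT)$ satisfies: $\alpha(\overline e)=\pm\alpha(e)$; $\alpha(e),\alpha(e')$ linearly independent over $\mathbb{Z}$ if $e\ne e'$, $i(e)=i(e')$; coefficients of each $\alpha(e)$ have gcd $1$. An abstract GKM graph is such $(\mathcal{G},\alpha)$ admitting a parallel transport, i.e. bijections $\mathcal{P}_e:\mathcal{E}_{i(e)}\to\mathcal{E}_{t(e)}$ with $\mathcal{P}_{\overline e}=\mathcal{P}_e^{-1}$,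 $\mathcal{P}_e(e)=\overline e$, $\alpha(\mathcal{P}_e(e'))-\alpha(e')\in\mathbb{Z}\alpha(e)$ for all $e'\in\mathcal{E}_{i(e)}$. *)

(* Defs.v *)
From HB Require Import structures.
From mathcomp Require Import all_boot all_order all_algebra.
From mathcomp Require Import mpoly.
Set Implicit Arguments. Unset Strict Implicit. Unset Printing Implicit Defensive.
Import Order.TTheory GRing.Theory Num.Theory.
Local Open Scope ring_scope.

(* H^*(BT) = Z[x_1..x_r] is {mpoly int[r]}; an element of H^2(BT) is
   represented by its integer coefficient row vector v : 'rV[int]_r,
   i.e. the linear form \sum_i v_i x_i. *)
Definition lin (r : nat) (v : 'rV[int]_r) : {mpoly int[r]} :=
  \sum_(i < r) (v 0 i)%:MP * 'X_i.

Definition gcd_coefs (r : nat) (v : 'rV[int]_r) : int :=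
  foldr gcdz 0 [seq v 0 i | i <- enum 'I_r].

(* A finite n-valent graph (multiple edges allowed, no loops), given by its
   vertex set V and its set E of directed edges, with reversal [erev],
   initial vertex [src] (= i) and terminal vertex [tgt] (= t). *)
Record graph (n : nat) := Graph {
  V : finType;
  E : finType;
  erev : E -> E;
  src : E -> V;
  tgt : E -> V;
  erevK : involutive erev;
  src_erev : forall e, src (erev e) = tgt e;
  no_loop : forall e, src e != tgt e;
  valent : forall p : V, #|[set e | src e == p]| = n
}.

Definition axial (n r : nat) (G : graph n) (alpha : E G -> 'rV[int]_r) :=
  [/\ forall e, alpha (erev e) = alpha e \/ alpha (erev e) = - alpha e,
      forall e e', e != e' -> src e = src e' ->
        forall a b : int, a *: alpha e + b *: alpha e' = 0 -> a = 0 /\ b = 0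
    & forall e, gcd_coefs (alpha e) = 1].

Definition parallel_transport (n r : nat) (G : graph n)
    (alpha : E G -> 'rV[int]_r) (Pt : E G -> E G -> E G) :=
  forall e,
    [/\ forall e', src e' = src e -> src (Pt e e') = tgt e,
        forall e', src e' = src e -> Pt (erev e) (Pt e e') = e',
        Pt e e = erev e
      & forall e', src e' = src e ->
          exists k : int, alpha (Pt e e') - alpha e' = k *: alpha e].

Definition abstract_GKM (n r : nat) (G : graph n) (alpha : E G -> 'rV[int]_r) :=
  axial alpha /\ exists Pt, parallel_transport alpha Pt.

(* Main.v *)
Require Import Defs.
From HB Require Import structures.
From mathcomp Require Import all_boot all_order all_algebra.
From mathcomp Require Import mpoly.
From mathcomp Require Import ring.
Import Order.TTheory GRing.Theory Num.Theory.
Set Implicit Arguments. Unset Strict Implicit. Unset Printing Implicit Defensive.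
Local Open Scope ring_scope.

Section Aux.
Variable r : nat.
Implicit Types v w : 'rV[int]_r.
Local Notation MP := {mpoly int[r]}.

Definition dv (l x : MP) := exists g, x = l * g.

Lemma dv0 l : dv l 0. Proof. by exists 0; rewrite mulr0. Qed.
Lemma dvD l x y : dv l x -> dv l y -> dv l (x + y).
Proof. by move=> [g ->] [h ->]; exists (g + h); rewrite mulrDr. Qed.
Lemma dvN l x : dv l x -> dv l (- x).
Proof. by move=> [g ->]; exists (- g); rewrite mulrN. Qed.
Lemma dvB l x y : dv l x -> dv l y -> dv l (x - y).
Proof. by move=> hx hy; apply: dvD => //; apply: dvN. Qed.
Lemma dvMr l x y : dv l x -> dv l (x * y).
Proof. by move=> [g ->]; exists (g * y); rewrite mulrA. Qed.
Lemma dvMl l x y : dv l y -> dv l (x * y).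
Proof. by rewrite mulrC; apply: dvMr. Qed.

Lemma dv_prod l (I : finType) (P : pred I) (x y : I -> MP) :
  (forall i, P i -> dv l (x i - y i)) ->
  dv l (\prod_(i | P i) x i - \prod_(i | P i) y i).
Proof.
move=> h; apply: (big_ind2 (fun a b => dv l (a - b))).
- by rewrite subrr; apply: dv0.
- move=> a b c d hab hcd.
  have -> : a * c - b * d = (a - b) * c + b * (c - d) by ring.
  by apply: dvD; [apply: dvMr | apply: dvMl].
- exact: h.
Qed.

Lemma linD v w : lin (v + w) = lin v + lin w.
Proof.
by rewrite /lin -big_split; apply: eq_bigr => i _; rewrite mxE mpolyCD mulrDl.
Qed.
Lemma linZ k v : lin (k *: v) = k%:MP * lin v.
Proof.
rewrite /lin mulr_sumr; apply: eq_bigr => i _; by rewrite mxE mpolyCM mulrA.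
Qed.
Lemma linN v : lin (- v) = - lin v.
Proof.
rewrite /lin -sumrN; apply: eq_bigr => i _; by rewrite mxE mpolyCN mulNr.
Qed.
Lemma linB v w : lin (v - w) = lin v - lin w.
Proof. by rewrite linD linN. Qed.

Lemma lin_eval v i : (lin v).@[fun k => (k == i)%:R] = v 0 i.
Proof.
rewrite /lin raddf_sum /= (bigD1 i) //= mevalM mevalC mevalXU eqxx mulr1.
rewrite big1 ?addr0 // => j hj; rewrite mevalM mevalC mevalXU.
by rewrite (negbTE hj) mulr0.
Qed.

Lemma lin_inj v : lin v = 0 -> v = 0.
Proof.
move=> h; apply/rowP => i; rewrite mxE -lin_eval h.
by rewrite meval0.
Qed.

Lemma bezout_seq (T : eqType) (s : seq T) (f : T -> int) : uniq s ->
  exists g : T -> int, \sum_(x <- s) g x * f x = foldr gcdz 0 (map f s).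
Proof.
elim: s => [|x s IH] /=; first by exists (fun _ => 0); rewrite big_nil.
move=> /andP [xs us]; have [g hg] := IH us.
have [u [v huv]] := Bezoutz (f x) (foldr gcdz 0 [seq f i | i <- s]).
exists (fun y => if y == x then u else v * g y).
rewrite big_cons eqxx -huv -hg mulr_sumr; congr (_ + _).
apply: eq_big_seq => y ys; have -> : (y == x) = false.
  by apply/eqP => yx; move: xs; rewrite -yx ys.
by rewrite mulrA.
Qed.

Lemma bezout_row v : gcd_coefs v = 1 -> exists u : 'I_r -> int,
  \sum_(i < r) u i * v 0 i = 1.
Proof.
rewrite /gcd_coefs => h.
have [g hg] := @bezout_seq _ _ (fun i => v 0 i) (enum_uniq 'I_r).
by exists g; rewrite -h -hg big_enum.
Qed.

Variable a : 'rV[int]_r.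
Variable u : 'I_r -> int.
Hypothesis hu : \sum_(i < r) u i * a 0 i = 1.

Definition lq : r.-tuple MP := [tuple 'X_i - (u i)%:MP * lin a | i < r].
Definition pi (x : MP) := x \mPo lq.

Definition dotu v := \sum_(i < r) v 0 i * u i.

Lemma pi_lin v : pi (lin v) = lin (v - dotu v *: a).
Proof.
rewrite linB linZ /pi /lin raddf_sum /=.
rewrite /dotu (big_morph _ (@mpolyCD _ _) (@mpolyC0 _ _)) mulr_suml -sumrB.
apply: eq_bigr => i _; rewrite rmorphM /= comp_mpolyC comp_mpolyXU.
rewrite -tnth_nth tnth_mktuple mpolyCM -/(lin a); ring.
Qed.

Lemma pi_a : pi (lin a) = 0.
Proof.
rewrite pi_lin /dotu.
have -> : \sum_(i < r) a 0 i * u i = 1.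
  by rewrite -hu; apply: eq_bigr => i _; rewrite mulrC.
by rewrite scale1r subrr /lin big1 // => i _; rewrite mxE mpolyC0 mul0r.
Qed.

Lemma pi_dv x : dv (lin a) x -> pi x = 0.
Proof. by move=> [g ->]; rewrite /pi rmorphM /= -/(pi _) pi_a mul0r. Qed.

Lemma pi_lin_cong v : dv (lin a) (pi (lin v) - lin v).
Proof.
rewrite pi_lin linB linZ; exists (- (dotu v)%:MP); ring.
Qed.

Lemma pi_prod (I : finType) (S : pred I) (b : I -> 'rV[int]_r) :
  dv (lin a) (pi (\prod_(i | S i) lin (b i)) - \prod_(i | S i) lin (b i)).
Proof.
rewrite /pi (rmorph_prod (comp_mpoly lq)) /=; apply: dv_prod => i _; exact: pi_lin_cong.
Qed.

Lemma cancel_R (F : MP) (I : finType) (S : pred I) (b : I -> 'rV[int]_r) :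
  (forall i, S i -> forall k k' : int, k *: a + k' *: b i = 0 -> k = 0 /\ k' = 0) ->
  dv (lin a) (pi F - F) ->
  dv (lin a) (F * \prod_(i | S i) lin (b i)) -> dv (lin a) F.
Proof.
move=> hb hF hFR; have := @pi_dv _ hFR; rewrite /pi rmorphM /=. rewrite (rmorph_prod (comp_mpoly lq)).
move/eqP; rewrite mulf_eq0 => /orP [/eqP h|].
  by move: hF; rewrite /pi h sub0r => /dvN; rewrite opprK.
rewrite prodf_seq_eq0 => /hasP [i _] /andP [Si].
move=> h0; have : pi (lin (b i)) = 0 by apply/eqP. rewrite pi_lin => /lin_inj h.
have [|_ /eqP] := hb i Si (- dotu (b i)) 1; last by rewrite oner_eq0.

by rewrite scale1r addrC scaleNr.
Qed.
End Aux.

Theorem lemma4p1 (n r : nat) (G : graph n) (alpha : E G -> 'rV[int]_r)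
  (HG : abstract_GKM alpha) (p q : V G) (hpq : p != q) :
  let P := \prod_(e : E G | (src e == p) && (tgt e != q)) lin (alpha e) in
  let Q := \prod_(e : E G | (src e == q) && (tgt e != p)) lin (alpha e) in
  let c := fun e : E G =>
    #|[set e' : E G | [&& src e' == p, tgt e' == q, (e' != e) &
                          (alpha (erev e') == - alpha e')]]| in
  forall e : E G, src e = p -> tgt e = q ->
    exists f : {mpoly int[r]}, P - (-1) ^+ (c e) * Q = lin (alpha e) * f.
Proof.
move=> P Q c e he1 he2.
case: HG => [[Hrev Hind Hgcd] [Pt HPt]].
have [u hu] := bezout_row (Hgcd e).
have [PT1 PT2 PT3 PT4] := HPt e.
have [PS1 PS2 PS3 PS4] := HPt (erev e).
have rK := @erevK _ G.
have tgt_erev : forall x : E G, tgt (erev x) = src x.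
  by move=> x; rewrite -src_erev rK.
pose C := fun e' : E G => [&& src e' == p, tgt e' == q & e' != e].
pose R := \prod_(e' | C e') lin (alpha e').
have S1 : \prod_(e' | (src e' == p) && (e' != e)) lin (alpha e') = P * R.
  rewrite (bigID (fun e' => tgt e' == q)) /= mulrC; congr (_ * _).
    apply: eq_bigl => x; case: (src x == p) => //=.
    case: (x =P e) => [->|] /=; first by rewrite he2 eqxx.
    by [].
  apply: eq_bigl => x; rewrite /C; case: (src x == p) => //=.
  by rewrite andbC.
have S2 : \prod_(f | (src f == q) && (f != erev e)) lin (alpha f) =
    Q * \prod_(e' | C e') lin (alpha (erev e')).
  rewrite (bigID (fun f => tgt f == p)) /= mulrC; congr (_ * _).
    apply: eq_bigl => x; case: (src x == q) => //=.
    case: (x =P erev e) => [->|] /=; first by rewrite tgt_erev he1 eqxx.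
    by [].
  rewrite (reindex_inj (inv_inj rK)) /=; apply: eq_bigl => x.
  rewrite /C src_erev tgt_erev (inj_eq (inv_inj rK)).
  by case: (tgt x == q); case: (src x == p); case: (x == e).
have S3 : \prod_(e' | C e') lin (alpha (erev e')) = (-1) ^+ (c e) * R.
  pose b := fun e' : E G => alpha (erev e') == - alpha e'.
  have -> : \prod_(e' | C e') lin (alpha (erev e')) =
      \prod_(e' | C e') ((-1) ^+ (b e') * lin (alpha e')).
    apply: eq_bigr => x _; rewrite /b; case: eqP => [->|].
      by rewrite linN expr1 mulN1r.
    by case: (Hrev x) => // -> _; rewrite expr0 mul1r.
  rewrite big_split /=; congr (_ * _).
  rewrite -(big_morph (fun k : nat => (-1) ^+ k : {mpoly int[r]}) (@exprD _ (-1)) (expr0 _)).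
  congr (_ ^+ _); rewrite /c -sum1_card (bigID b) /= addnC big1 ?add0n; last first.
    by move=> x /andP [_ /negbTE ->].
  apply: eq_big => [x|x /andP [_ ->]] //; by rewrite inE /C /b -!andbA.
have S4 : \prod_(e' | (src e' == p) && (e' != e)) lin (alpha (Pt e e')) =
    \prod_(f | (src f == q) && (f != erev e)) lin (alpha f).
  symmetry; rewrite (reindex_onto (Pt e) (Pt (erev e))) /=; last first.
    move=> f /andP [/eqP hf _]; have := PS2 f; rewrite rK; apply.
    by rewrite hf src_erev he2.
  apply: eq_bigl => x; apply/idP/idP.
    move=> /andP [/andP [/eqP hs hne] /eqP hx].
    have hsx : src x = p by rewrite -hx PS1 ?tgt_erev // src_erev he2.
    rewrite hsx eqxx /=; apply: contraNneq hne => ->; by rewrite PT3.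
  move=> /andP [/eqP hs hne].
  rewrite PT1 ?hs // -he2 eqxx /= PT2 ?hs // eqxx andbT.
  apply: contraNneq hne => h; rewrite -[x](PT2 x) ?hs // h PS3 rK //.
have S5 : dv (lin (alpha e))
    (\prod_(e' | (src e' == p) && (e' != e)) lin (alpha (Pt e e')) -
     \prod_(e' | (src e' == p) && (e' != e)) lin (alpha e')).
  apply: dv_prod => x /andP [/eqP hs _].
  have [k hk] := PT4 x (etrans hs (esym he1)).
  by exists k%:MP; rewrite -linB hk linZ mulrC.
rewrite S4 S2 S3 S1 in S5.
have hF : dv (lin (alpha e)) ((P - (-1) ^+ c e * Q) * R).
  move/dvN: S5; congr dv; rewrite /R; ring.
apply: (cancel_R hu (S := C) (b := alpha) _ _ hF).
  move=> x /and3P [/eqP hs _ hne] k k' hk.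
  by apply: (Hind e x) => //; [rewrite eq_sym | rewrite hs].
rewrite /pi rmorphB rmorphM rmorph_sign /=.
have -> : (P \mPo lq (alpha e) u - (-1) ^+ c e * (Q \mPo lq (alpha e) u)) - (P - (-1) ^+ c e * Q)
  = (pi (alpha e) u P - P) - (-1) ^+ c e * (pi (alpha e) u Q - Q) by rewrite /pi; ring.
by apply: dvB; [|apply: dvMl]; apply: pi_prod.
Qed.
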